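(* Let $f\ge0$ be integrable on $[-\pi,\pi]$ with $\int f>0$ and such that $\lim_{n\to\infty}\sigma_{n+1}^2(f)/\sigma_n^2(f)=1$. If $g$ is a nonnegative, bounded, measurable function on $[-\pi,\pi]$ that is continuous at $\lambda=0$, then $$\limsup_{n\to\infty}\frac{\sigma_n^2(fg)}{\sigma_n^2(f)}\le g(0).$$
   Context: For a nonnegative integrable weight $w$ on $[-\pi,\pi]$, $\sigma_n^2(w)=\min_{q\in\mathcal{Q}_n(1)}\int_{-\pi}^{\pi}|q(e^{i\lambda})|^2w(\lambda)\,d\lambda$, where $\mathcal{Q}_n(1)$ is the set of complex polynomials of degree at most $n$ with $q(1)=1$. *)

(* Defs.v *)
From HB Require Import structures.
From mathcomp Require Import all_boot all_order all_algebra.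
From mathcomp Require Import all_classical all_reals all_analysis.
From mathcomp Require Import complex.
Set Implicit Arguments. Unset Strict Implicit. Unset Printing Implicit Defensive.
Import Order.TTheory GRing.Theory Num.Theory numFieldNormedType.Exports.
Local Open Scope classical_set_scope.
Local Open Scope ring_scope.

Definition expi {R : realType} (l : R) : R[i] := Complex (cos l) (sin l).

Definition Qn1 {R : realType} (n : nat) : set {poly R[i]} :=
  [set q : {poly R[i]} | (size q <= n.+1)%N /\ q.[1] = 1].

Definition qform {R : realType} (w : R -> R) (q : {poly R[i]}) : R :=
  Rintegral lebesgue_measure `[(- pi)%R, pi]%classic
    (fun l : R => (complex.Re q.[expi l] ^+ 2 + complex.Im q.[expi l] ^+ 2) * w l).

(* sigma_n^2(w) = min_{q in Q_n(1)} qform w q  (as an infimum; the min is attained) *)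
Definition sigma2 {R : realType} (w : R -> R) (n : nat) : R :=
  inf [set qform w q | q in Qn1 n].

(* Main.v *)
Require Import Defs.
From HB Require Import structures.
From mathcomp Require Import all_boot all_order all_algebra.
From mathcomp Require Import all_classical all_reals all_analysis.
From mathcomp Require Import complex.
Import Order.TTheory GRing.Theory Num.Theory numFieldNormedType.Exports.
Local Open Scope classical_set_scope.
Local Open Scope ring_scope.
From mathcomp Require Import ring lra zify.

Section S.
Variable R : realType.

Lemma esup_le_near (u : (\bar R)^nat) l :
  (\forall n \near \oo, (u n <= l)%E) -> (limn_esup u <= l)%E.
Proof.
move=> [N _ HN]; rewrite limn_esup_lim; apply: lime_le; first exact: is_cvg_esups.
exists N => // m /= Nm; apply: ge_ereal_sup => _ [k /= mk <-].
by apply: HN; rewrite /= (leq_trans Nm mk).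
Qed.

Definition nrm2 (z : R[i]) : R := complex.Re z ^+ 2 + complex.Im z ^+ 2.

Lemma nrm2M (z w : R[i]) : nrm2 (z * w) = nrm2 z * nrm2 w.
Proof. case: z => a b; case: w => c d; rewrite /nrm2 /=. ring. Qed.

Lemma nrm2X (z : R[i]) j : nrm2 (z ^+ j) = nrm2 z ^+ j.
Proof.
elim: j => [|j IH]; first by rewrite !expr0 /nrm2 /=; ring.
by rewrite !exprS nrm2M IH.
Qed.

Lemma nrm2_ge0 z : 0 <= nrm2 z.
Proof. by rewrite /nrm2 addr_ge0 // sqr_ge0. Qed.

Definition Kp (j : nat) : {poly R[i]} := (2^-1 *: ('X + 1)) ^+ j.

Lemma Kp_eval j (z : R[i]) : (Kp j).[z] = ((1 + z) / 2) ^+ j.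
Proof.
rewrite /Kp horner_exp hornerZ hornerD hornerX hornerC; congr (_ ^+ _).
by rewrite mulrC addrC.
Qed.

Lemma size_Kp j : (size (Kp j) <= j.+1)%N.
Proof.
rewrite /Kp; apply: (leq_trans (size_poly_exp_leq _ _)).
have h : (size (2^-1 *: ('X + 1 : {poly R[i]})) <= 2)%N.
  by apply: (leq_trans (size_scale_leq _ _)); rewrite -polyC1 size_XaddC.
rewrite ltnS; move: h; case: (size _) => [|[|[|k]]] //= _; by rewrite ?mul0n ?mul1n.
Qed.

Lemma nrm2K j l : nrm2 (Kp j).[expi l] = ((1 + cos l) / 2) ^+ j.
Proof.
rewrite Kp_eval nrm2X; congr (_ ^+ _).
rewrite /nrm2 /expi /=.
have h := cos2Dsin2 l.
apply: (@eq_trans _ _ (((1 + cos l)^+2 + sin l ^+2)/4)); first by field.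
rewrite (_ : sin l ^+2 = 1 - cos l^+2); first by field.
by rewrite -h; ring.
Qed.

End S.
Arguments nrm2 {R}. Arguments Kp {R}.


Section S.
Variable R : realType.

Lemma bnd_of (D : set R) (h : R -> R) C :
  (forall x, D x -> `|h x| <= C) -> [bounded h x | x in D].
Proof.
move=> hC; exists C; split; first exact: num_real.
by move=> M /ltW CM x Dx; apply: le_trans (hC x Dx) CM.
Qed.

Lemma Re_step (a c : R[i]) l :
  complex.Re (a * expi l + c) = complex.Re a * cos l - complex.Im a * sin l + complex.Re c.
Proof. by case: a => ? ?; case: c => ? ?; rewrite /expi /=. Qed.

Lemma Im_step (a c : R[i]) l :
  complex.Im (a * expi l + c) = complex.Re a * sin l + complex.Im a * cos l + complex.Im c.
Proof. by case: a => ? ?; case: c => ? ?; rewrite /expi /=. Qed.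

Lemma mcos : measurable_fun setT (@cos R).
Proof. apply: measurable_realfun.continuous_measurable_fun; exact: continuous_cos. Qed.
Lemma msin : measurable_fun setT (@sin R).
Proof. apply: measurable_realfun.continuous_measurable_fun; exact: continuous_sin. Qed.

Lemma poly_nice (p : {poly R[i]}) :
  [/\ measurable_fun setT (fun l => complex.Re p.[expi l]),
      measurable_fun setT (fun l => complex.Im p.[expi l]) &
      exists C, forall l, `|complex.Re p.[expi l]| <= C /\ `|complex.Im p.[expi l]| <= C].
Proof.
elim/poly_ind: p => [|p c [mRe mIm [C hC]]].
  split.
  - by under eq_fun do rewrite horner0 /=; exact: measurable_cst.
  - by under eq_fun do rewrite horner0 /=; exact: measurable_cst.
  - by exists 0 => l; rewrite horner0 /= normr0.
have E l : (p * 'X + c%:P).[expi l] = p.[expi l] * expi l + c by rewrite hornerMXaddC.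
split.
- under eq_fun do rewrite E Re_step.
  apply: measurable_realfun.measurable_funD; last exact: measurable_cst.
  apply: measurable_realfun.measurable_funB; apply: measurable_realfun.measurable_funM => //; [exact: mcos|exact: msin].
- under eq_fun do rewrite E Im_step.
  apply: measurable_realfun.measurable_funD; last exact: measurable_cst.
  apply: measurable_realfun.measurable_funD; apply: measurable_realfun.measurable_funM => //; [exact: msin|exact: mcos].
- exists (C + C + `|complex.Re c| + `|complex.Im c|) => l; rewrite E Re_step Im_step.
  have [h1 h2] := hC l.
  have c1 := cos_le1 l; have c2 := cos_geN1 l; have s1 := sin_le1 l; have s2 := sin_geN1 l.
  have n1 : `|cos l| <= 1 by rewrite ler_norml c1 c2.
  have n2 : `|sin l| <= 1 by rewrite ler_norml s1 s2.
  have b (x y : R) : `|x| <= C -> `|y| <= 1 -> `|x * y| <= C.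
    move=> hx hy; rewrite normrM; apply: le_trans (ler_pM _ _ hx hy) _ => //.
    by rewrite mulr1.
  have C0 : 0 <= C by apply: le_trans h1.
  split.
  + have k : `|complex.Re p.[expi l] * cos l - complex.Im p.[expi l] * sin l| <= C + C.
      by apply: le_trans (ler_normB _ _) _; apply: lerD; exact: b.
    apply: le_trans (ler_normD _ _) _; have := normr_ge0 (complex.Im c); lra.
  + have k : `|complex.Re p.[expi l] * sin l + complex.Im p.[expi l] * cos l| <= C + C.
      by apply: le_trans (ler_normD _ _) _; apply: lerD; exact: b.
    apply: le_trans (ler_normD _ _) _; have := normr_ge0 (complex.Re c); lra.
Qed.


Definition Dpi : set R := `[(- pi)%R, pi]%classic.

Lemma mDpi : measurable Dpi.
Proof. exact: measurable_itv. Qed.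

Lemma nrm2_nice (p : {poly R[i]}) :
  measurable_fun setT (fun l => nrm2 p.[expi l]) /\ (exists C, forall l, `|nrm2 p.[expi l]| <= C).
Proof.
have [mRe mIm [C hC]] := poly_nice p; split.
  by apply: measurable_realfun.measurable_funD; apply: measurable_realfun.measurable_funX.
exists (C ^+ 2 + C ^+ 2) => l; have [h1 h2] := hC l.
rewrite ger0_norm ?nrm2_ge0 // /nrm2 -(real_normK (num_real (complex.Re _))).
rewrite -(real_normK (num_real (complex.Im _))).
have C0 : 0 <= C by apply: le_trans h1.
by apply: lerD; rewrite !expr2; apply: ler_pM.
Qed.

Lemma qint (w : R -> R) (p : {poly R[i]}) :
  lebesgue_measure.-integrable Dpi (EFin \o w) ->
  lebesgue_measure.-integrable Dpi (EFin \o (fun l => nrm2 p.[expi l] * w l)).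
Proof.
move=> wi; have [mh [C hC]] := nrm2_nice p.
have -> : (EFin \o (fun l => nrm2 p.[expi l] * w l)) =
   ((EFin \o (fun l => nrm2 p.[expi l])) \* (EFin \o w))%E.
  by apply/funext => l /=; rewrite EFinM.
apply: integrableMr => //; first exact: mDpi.
- exact: measurable_funTS.
- by apply: (@bnd_of _ _ C) => x _; exact: hC.
Qed.

End S.


Section S.
Variable R : realType.
Implicit Types (w f g : R -> R).

Definition nonneg w := forall x, Dpi R x -> 0 <= w x.

Lemma qform_ge0 w p : nonneg w -> 0 <= qform w p.
Proof.
move=> w0; apply: Rintegral_ge0 => x Dx.
by apply: mulr_ge0; [exact: (nrm2_ge0 _) | exact: w0].
Qed.

Lemma Qn1_one n : Qn1 n (1 : {poly R[i]}).
Proof. by split; [rewrite size_poly1 | rewrite hornerC]. Qed.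

Lemma sigma2_le w n q : nonneg w -> Qn1 n q -> sigma2 w n <= qform w q.
Proof.
move=> w0 hq; apply: ge_inf; last by exists q.
by exists 0 => _ [p _ <-]; exact: qform_ge0.
Qed.

Lemma sigma2_ub w n c : (forall q, Qn1 n q -> c <= qform w q) -> c <= sigma2 w n.
Proof.
move=> h; apply: lb_le_inf; first by exists (qform w 1), 1; first exact: Qn1_one.
by move=> _ [p hp <-]; exact: h.
Qed.

Lemma sigma2_ge0 w n : nonneg w -> 0 <= sigma2 w n.
Proof. by move=> w0; apply: sigma2_ub => q _; exact: qform_ge0. Qed.

Lemma Qn1_mulK m j (q : {poly R[i]}) : Qn1 m q -> Qn1 (m + j) (q * Kp j).
Proof.
move=> [hs h1]; split.
  apply: leq_trans (size_mul_leq _ _) _.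
  have := size_Kp R j; move: hs; case: (size q) => [|a]; case: (size (Kp j)) => [|b] //=; lia.
rewrite hornerM h1 Kp_eval mul1r.
have -> : (1 + 1) / 2 = 1 :> R[i] by field.
by rewrite expr1n.
Qed.

Lemma key f g (M B : R) j m :
  lebesgue_measure.-integrable (Dpi R) (EFin \o f) -> nonneg f ->
  measurable_fun (Dpi R) g -> nonneg g -> (forall x, Dpi R x -> g x <= M) ->
  0 < B -> (forall l, Dpi R l -> ((1 + cos l) / 2) ^+ j * g l <= B) ->
  sigma2 (fun l => f l * g l) (m + j) <= B * sigma2 f m.
Proof.
move=> fi f0 mg g0 gM B0 hB.
have fgi : lebesgue_measure.-integrable (Dpi R) (EFin \o (fun l => f l * g l)).
  have -> : (EFin \o (fun l => f l * g l)) = ((EFin \o f) \* (EFin \o g))%E.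
    by apply/funext => l /=; rewrite EFinM.
  apply: integrableMl => //; first exact: mDpi.
  apply: (@bnd_of _ _ _ M) => x Dx; rewrite ger0_norm; [exact: gM | exact: g0].
have fg0 : nonneg (fun l => f l * g l) by move=> x Dx; apply: mulr_ge0; [exact: f0|exact: g0].
rewrite mulrC -ler_pdivrMr //; apply: sigma2_ub => q hq.
rewrite ler_pdivrMr // mulrC.
apply: le_trans (@sigma2_le _ _ _ fg0 (@Qn1_mulK m j q hq)) _.
have K1 := @qint R _ (Kp j) fgi.
have e1 : qform (fun l => f l * g l) (q * Kp j) =
  \int[lebesgue_measure]_(l in Dpi R) (nrm2 q.[expi l] * (nrm2 (Kp j).[expi l] * (f l * g l))).
  apply: eq_Rintegral => l _; rewrite hornerM.
  by have := @nrm2M R q.[expi l] (Kp j).[expi l]; rewrite /nrm2 => ->; rewrite mulrA.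
rewrite e1.
have Bfi : lebesgue_measure.-integrable (Dpi R) (EFin \o (fun l => B * f l)).
  have -> : (EFin \o (fun l => B * f l)) = (fun x => B%:E * (EFin \o f) x)%E.
    by apply/funext => x /=; rewrite EFinM.
  apply: integrableZl => //; exact: mDpi.
have ineq : \int[lebesgue_measure]_(l in Dpi R) (nrm2 q.[expi l] * (nrm2 (Kp j).[expi l] * (f l * g l))) <=
  \int[lebesgue_measure]_(l in Dpi R) (nrm2 q.[expi l] * (B * f l)).
  apply: le_Rintegral; [exact: measurable_itv | exact: (@qint R _ q K1) | exact: (@qint R _ q Bfi) |].
  move=> l Dl; apply: ler_wpM2l; first exact: nrm2_ge0.
  rewrite nrm2K mulrCA [X in _ <= X]mulrC; apply: ler_wpM2l; first exact: f0.
  exact: hB.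
apply: le_trans ineq _.
rewrite /qform -(RintegralZl B _ (@qint R _ q fi)); last exact: measurable_itv.
rewrite le_eqVlt; apply/orP; left; apply/eqP; apply: eq_Rintegral => l _ /=; by rewrite mulrCA.
Qed.

End S.
Arguments nonneg {R}.


Section S.
Variable R : realType.

Lemma ev_nz (s : nat -> R) : (s n.+1 / s n) @[n --> \oo] --> (1 : R) ->
  exists N, forall n, (N <= n)%N -> s n != 0.
Proof.
move=> h; have hlt : (2^-1 : R) < 1 by rewrite invf_lt1 ?ltr1n.
have [N _ HN] := cvgr_gt _ h _ hlt.
exists N => n /HN /=; apply: contraTneq => ->; rewrite invr0 mulr0.
by rewrite ltNge invr_ge0 ler0n.
Qed.

Lemma ratio_shift (s : nat -> R) : (s n.+1 / s n) @[n --> \oo] --> (1 : R) ->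
  forall j, (s (n + j)%N / s n) @[n --> \oo] --> (1 : R).
Proof.
move=> h; have [N HN] := @ev_nz s h.
elim=> [|j IH].
  have e : {near \oo, (fun _ => 1 : R) =1 (fun n => s (n + 0)%N / s n)}.
    by exists N => // n /= hn; rewrite addn0 divff // HN.
  exact: cvg_trans (near_eq_cvg e) (cvg_cst (1 : R)).
have h2 : (s (n + j).+1 / s (n + j)%N) @[n --> \oo] --> (1 : R).
  by rewrite (cvg_shiftn j (fun n => s n.+1 / s n)).
have := cvgM h2 IH; rewrite mulr1 => h3.
have e : {near \oo, (fun n => s (n + j).+1 / s (n + j)%N * (s (n + j)%N / s n)) =1
   (fun n => s (n + j.+1)%N / s n)}.
  exists N => // n /= hn; rewrite addnS mulrA divfK // HN //; lia.
exact: cvg_trans (near_eq_cvg e) (h3 _).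
Qed.

End S.

Section T.
Variable R : realType.

Lemma Dpi_itv (l : R) : Dpi R l -> - pi <= l <= pi.
Proof. by rewrite /Dpi /= in_itv. Qed.

Lemma cos_bound (d l : R) : 0 < d <= pi -> Dpi R l -> d <= `|l| -> cos l <= cos d.
Proof.
move=> /andP[d0 dpi] /Dpi_itv /andP[l1 l2] dl.
have la : `|l| <= pi by rewrite ler_norml l1 l2.
have -> : cos l = cos `|l|.
  by case: (leP 0 l) => h; [rewrite ger0_norm | rewrite ltr0_norm // cosN].
move: dl; rewrite le_eqVlt => /orP[/eqP -> //|dl].
apply/ltW; rewrite ltr_cos // in_itv /= ?la ?normr_ge0 //.
by rewrite (ltW d0) dpi.
Qed.

End T.


Theorem lemma5p4 (R : realType) (f g : R -> R) :
  measurable_fun `[(- pi)%R, pi] f ->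
  (forall x, x \in `[(- pi)%R, pi] -> 0 <= f x) ->
  lebesgue_measure.-integrable `[(- pi)%R, pi] (EFin \o f) ->
  (0 < \int[lebesgue_measure]_(x in `[(- pi)%R, pi]) (f x)%:E)%E ->
  (sigma2 f n.+1 / sigma2 f n) @[n --> \oo] --> (1 : R) ->
  measurable_fun `[(- pi)%R, pi] g ->
  (forall x, x \in `[(- pi)%R, pi] -> 0 <= g x) ->
  (exists M : R, forall x, x \in `[(- pi)%R, pi] -> g x <= M) ->
  {for 0, continuous g} ->
  (limn_esup (fun n => (sigma2 (fun l => f l * g l) n / sigma2 f n)%:E)
     <= (g 0)%:E)%E.
Proof.
move=> mf f0' fi _ hr mg g0' [M hM] gc.
have f0 : nonneg f by move=> x Dx; apply: f0'; exact: Dx.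
have g0 : nonneg g by move=> x Dx; apply: g0'; exact: Dx.
have gM : forall x, Dpi R x -> g x <= M by move=> x Dx; apply: hM; exact: Dx.
have D0 : Dpi R 0.
  by rewrite /Dpi /= in_itv /= oppr_le0 ltW ?pi_gt0.
have g00 : 0 <= g 0 by exact: g0.
have M0 : 0 <= M by apply: le_trans g00 (gM _ D0).
have [N HN] := @ev_nz R _ hr.
apply/lee_addgt0Pr => e e0.
have e4 : 0 < e / 4 by rewrite divr_gt0.
have [d d0 hd] : exists2 d : R, 0 < d & forall x, `|x| < d -> g x < g 0 + e / 4.
  have H2 : \forall t \near (0:R), `|g 0 - g t| < e / 4 .
    have H1 := cvgr_dist_lt _ _ gc _ e4; apply: H1.
  have [d d0 hd] := (iffLR (@nbhs_norm0P _ R^o _)) H2.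
  exists d => // x hx.
  by have := hd x hx; rewrite /= ltr_distlC => /andP[_ ->].
pose d' := Num.min d pi.
have d'0 : 0 < d' by rewrite lt_min d0 pi_gt0.
have d'pi : d' <= pi by rewrite ge_min lexx orbT.
have d'd : d' <= d by rewrite ge_min lexx.
pose c := (1 + cos d') / 2.
have c0 : 0 <= c by rewrite /c divr_ge0 // -lerBlDl sub0r cos_geN1.
have cd1 : cos d' < 1.
  rewrite -(cos0 R) ltr_cos //; rewrite in_itv /=.
    by rewrite lexx (ltW (pi_gt0 R)).
  by rewrite (ltW d'0) d'pi.
have c1 : c < 1 by rewrite /c; lra.
have [j hj] : exists j, M * c ^+ j < e / 4.
  have hc : (fun j => M * c ^+ j) @ \oo --> (0:R).
    have hc' : `|c| < 1 by rewrite ger0_norm //; apply: c1.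
    have h := @cvgMl_tmp R nat \oo _ (fun n => c ^+ n) M 0 (cvg_expr hc').
    rewrite mulr0 in h; exact: h.
  have [K _ HK] := cvgr_lt _ hc _ e4.
  by exists K; have := HK K (leqnn K).
pose B := g 0 + e / 4 + e / 4.
have B0 : 0 < B by rewrite /B; lra.
have hB : forall l, Dpi R l -> ((1 + cos l) / 2) ^+ j * g l <= B.
  move=> l Dl.
  pose a := (1 + cos l) / 2.
  have a0 : 0 <= a by rewrite /a divr_ge0 // -lerBlDl sub0r cos_geN1.
  have a1 : a <= 1 by have := cos_le1 l; rewrite /a; lra.
  have aj1 : a ^+ j <= 1 := exprn_ile1 j a0 a1.
  have aj0 : 0 <= a ^+ j := exprn_ge0 j a0.
  have gl0 := g0 l Dl.
  rewrite -/a.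
  case: (ltP `|l| d) => hl.
    have := hd l hl => hgl.
    have : a ^+ j * g l <= g l by rewrite ler_piMl.
    rewrite /B; lra.
  have hcl : cos l <= cos d' by apply: cos_bound => //; [rewrite d'0 d'pi | exact: le_trans d'd hl].
  have ac : a <= c by rewrite /a /c; lra.
  have acj : a ^+ j <= c ^+ j by apply: lerXn2r; rewrite ?nnegrE.
  have cj0 : 0 <= c ^+ j := exprn_ge0 j c0.
  have h1 : a ^+ j * g l <= c ^+ j * M.
    exact: (ler_pM aj0 gl0 acj (gM l Dl)).
  rewrite /B; lra.
have hk m : sigma2 (fun l => f l * g l) (m + j) <= B * sigma2 f m.
  exact: (@key R f g M B j m fi f0 mg g0 gM B0 hB).
have hr2 : (fun m => sigma2 f m / sigma2 f (m + j)%N) @ \oo --> (1:R).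
  have h := cvgV (oner_neq0 R) (@ratio_shift R (sigma2 f) hr j).
  rewrite invr1 in h.
  have ee : {near \oo, (fun m => (sigma2 f (m + j)%N / sigma2 f m)^-1) =1
     (fun m => sigma2 f m / sigma2 f (m + j)%N)}.
    by exists 0%N => // m _ /=; rewrite invf_div.
  first [exact: cvg_trans (near_eq_cvg ee) (h _) | exact: cvg_trans (near_eq_cvg ee) h].
have hr3 : (fun m => B * (sigma2 f m / sigma2 f (m + j)%N)) @ \oo --> B.
  have h := @cvgMl_tmp R nat \oo _ _ B 1 hr2; rewrite mulr1 in h; exact: h.
have hBe : B < B + e / 4 by lra.
have [K _ HK] := cvgr_lt _ hr3 _ hBe.
apply: esup_le_near.
exists (K + N + j)%N => // n /= hn.
have hm : (K <= n - j)%N by move: hn; clear; lia.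
have hnj : n = (n - j + j)%N by move: hn; clear; lia.
have sn0 : 0 < sigma2 f n.
  by rewrite lt_def HN ?sigma2_ge0 //; move: hn; clear; lia.
have := HK (n - j)%N hm => /= hlt.
rewrite -hnj in hlt.
have := hk (n - j)%N; rewrite -hnj => hle.
rewrite -EFinD lee_fin ler_pdivrMr //.
apply: le_trans hle _.
have -> : B * sigma2 f (n - j)%N = B * (sigma2 f (n - j)%N / sigma2 f n) * sigma2 f n.
  by rewrite -mulrA divfK // gt_eqF.
apply: ler_wpM2r; first exact: ltW.
apply: ltW; apply: (lt_le_trans hlt); rewrite /B; move: e0; clear; lra.
Qed.
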